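(* Let $P$ be a finite poset and $q$ a positive integer such that every chain of $P$ has at most $q$ elements. Then $\Gamma(P,q)$ is the poset with elements $\{(p,k): p\in P,\ 1+\delta(p)\le k\le q-\nu(p)-1\}$ whose covering relations are $(p_1,k_1)\lessdot(p_2,k_2)$ if and only if either (1) $p_1=p_2$ and $k_1=k_2+1$, or (2) $p_1\lessdot p_2$ in $P$ and $k_1+1=k_2$.
   Context: For $p\in P$, $\delta(p)$ (resp. $\nu(p)$) is the number of elements less (resp. greater) than $p$ in a chain of maximum size containing $p$. $\Gamma(P,q)$ is defined as $\Gamma(P,R)$ for the restriction function $R(p)=\{k\in\mathbb{Z}:1+\delta(p)\le k\le q-\nu(p)\}$. For a restriction function $R$ (each $R(p)$ nonempty finite subset of $\mathbb{Z}$), let $R(p)^*=R(p)\setminus\{\max R(p)\}$, $R(p)_{>k}$ (resp. $R(p)_{<k}$) the smallest (resp. largest) element of $R(p)$ greater (resp. less) than $k$. $\Gamma(P,R)$ is the poset on $\{(p,k):p\in P,k\in R(p)^*\}$ whose order is the reflexive–transitive closure of the relation $(p_1,k_1)\lessdot(p_2,k_2)$ (its covering relations), holding iff either (i) $p_1=p_2$ and $R(p_1)_{>k_2}=k_1$; or (ii) $p_1\lessdot p_2$ in $P$, $k_1=R(p_1)_{<k_2}$, $k_1\ne\max R(p_1)$, and no $k\in R(p_2)$ with $k>k_2$ has $R(p_1)_{<k}=k_1$. *)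

(* Defs.v *)
From HB Require Import structures.
From mathcomp Require Import all_boot all_order all_algebra.
From Stdlib Require Import Relations.
Set Implicit Arguments. Unset Strict Implicit. Unset Printing Implicit Defensive.
Import Order.TTheory GRing.Theory Num.Theory.

Local Open Scope order_scope.

Section PosetDefs.
Context {disp : Order.disp_t} {P : finPOrderType disp}.

Definition is_chain (C : {set P}) : bool :=
  [forall x in C, forall y in C, x >=< y].

Definition covers (a b : P) : bool := (a < b) && [forall z : P, ~~ ((a < z) && (z < b))].

Definition maxchain (p : P) : {set P} :=
  fintype.arg_max [set p] (fun C : {set P} => is_chain C && (p \in C)) (fun C => #|C|).

Definition delta (p : P) : nat := #|[set x in maxchain p | x < p]|.
Definition nu (p : P) : nat := #|[set x in maxchain p | p < x]|.

End PosetDefs.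

Local Open Scope ring_scope.

(* A restriction function R : P -> seq int, R p viewed as a finite set of integers. *)
Definition smax (s : seq int) : int := foldr Num.max (head 0 s) s.

Definition is_succ_in (s : seq int) (k k' : int) : bool :=
  [&& k' \in s, k < k' & all (fun j => ~~ ((k < j) && (j < k'))) s].
Definition is_pred_in (s : seq int) (k k' : int) : bool :=
  [&& k' \in s, k' < k & all (fun j => ~~ ((k' < j) && (j < k))) s].

Section Gamma.
Context {disp : Order.disp_t} {P : finPOrderType disp}.
Variable R : P -> seq int.

Definition gamma_elem (x : P * int) : bool :=
  (x.2 \in R x.1) && (x.2 != smax (R x.1)).

Definition gamma_gen (x y : P * int) : Prop :=
  let: (p1, k1) := x in let: (p2, k2) := y in
  gamma_elem x /\ gamma_elem y /\
  ( (p1 = p2 /\ is_succ_in (R p1) k2 k1)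
  \/ (covers p1 p2 /\ is_pred_in (R p1) k2 k1 /\ k1 != smax (R p1) /\
      (forall k, k \in R p2 -> k2 < k -> ~~ is_pred_in (R p1) k k1)) ).

Definition gamma_le (x y : P * int) : Prop := clos_refl_trans _ gamma_gen x y.

Definition gamma_covers (x y : P * int) : Prop :=
  [/\ gamma_elem x, gamma_elem y, x <> y, gamma_le x y &
      forall z, gamma_elem z -> gamma_le x z -> gamma_le z y -> z = x \/ z = y].

End Gamma.

(* the restriction function R(p) = {k in Z : 1 + delta p <= k <= q - nu p}
   (all such k are >= 1, so enumerating 0..q suffices) *)
Definition Rq {disp : Order.disp_t} {P : finPOrderType disp} (q : nat) (p : P)
  : seq int :=
  [seq (Posz k) | k <- iota 0 q.+1 &
     ((1 + (delta p)%:Z <= Posz k) && (Posz k <= q%:Z - (nu p)%:Z))].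

(* Main.v *)
Require Import Defs.
From HB Require Import structures.
From mathcomp Require Import all_boot all_order all_algebra.
From mathcomp Require Import zify.
From Stdlib Require Import Relations.
Import Order.TTheory GRing.Theory Num.Theory.
Local Open Scope ring_scope.

Lemma foldr_max_ge (d : int) s j : j \in s -> j <= foldr Num.max d s.
Proof.
elim: s => //= a s IH; rewrite in_cons => /orP[/eqP->|/IH H].
  by rewrite le_max lexx.
by rewrite le_max H orbT.
Qed.

Lemma foldr_max_in (d : int) s : foldr Num.max d s \in d :: s.
Proof.
elim: s => /= [|a s IH]; first by rewrite mem_seq1.
case: (lerP a (foldr Num.max d s)) => H.
  move: IH; rewrite !in_cons => /orP[->//|->]; by rewrite !orbT.
by rewrite !in_cons eqxx orbT.
Qed.

Lemma smax_spec s : s != [::] -> smax s \in s /\ forall j, j \in s -> j <= smax s.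
Proof.
case: s => // a s _; split; last exact: foldr_max_ge.
have := foldr_max_in a (a :: s); rewrite /smax /= in_cons => /orP[/eqP->|//].
by rewrite in_cons eqxx.
Qed.

Section S.
Context {disp : Order.disp_t} {P : finPOrderType disp} (q : nat).
Hypothesis Hq : forall C : {set P}, is_chain C -> (#|C| <= q)%N.

Lemma Rq_mem (p : P) k : (k \in Rq q p) = (1 + (delta p)%:Z <= k) && (k <= q%:Z - (nu p)%:Z).
Proof.
rewrite /Rq; apply/mapP/idP.
  by case => n; rewrite mem_filter => /andP[H _] ->.
move=> H; case: k H => [n|n] H; last by exfalso; lia.
exists n => //; rewrite mem_filter H mem_iota /=; lia.
Qed.

Lemma maxchainP (p : P) : is_chain (maxchain p) && (p \in maxchain p).
Proof.
rewrite /maxchain; case: arg_maxnP => //.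
rewrite /is_chain inE eqxx andbT; apply/forall_inP => x /set1P -> ;
 apply/forall_inP => y /set1P ->; exact: comparablexx.
Qed.

Lemma lo_hi (p : P) : 1 + (delta p)%:Z <= q%:Z - (nu p)%:Z.
Proof.
have /andP[Hc Hp] := maxchainP p.
set C := maxchain p.
have Hle := @Hq _ Hc.
set A := [set x in C | (x < p)%O].
set B := [set x in C | (p < x)%O].
have HAB : A :&: B = set0.
  apply/setP => x; rewrite !inE; apply/negbTE; apply/negP => /andP[/andP[_ h1] /andP[_ h2]].
  by move: (lt_trans h1 h2); rewrite ltxx.
have Hcard : #|p |: (A :|: B)| = (#|A| + #|B|).+1.
  rewrite cardsU1 cardsU HAB cards0 subn0.
  have -> : p \notin A :|: B by rewrite !inE !ltxx !andbF.
  by rewrite add1n.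
have Hsub : p |: (A :|: B) \subset C.
  apply/subsetP => x; rewrite !inE => /orP[/eqP->//|/orP[/andP[]|/andP[]]] //.
have := subset_leq_card Hsub; rewrite Hcard => H.
have H2 : (#|A| + #|B| < q)%N := leq_trans H Hle.
rewrite /delta /nu -/C -/A -/B; clear -H2; lia.
Qed.

Lemma Rq_nil (p : P) : Rq q p != [::].
Proof.
apply/negP => /eqP E.
have : q%:Z - (nu p)%:Z \in Rq q p by rewrite Rq_mem lexx lo_hi.
by rewrite E.
Qed.

Lemma smax_Rq (p : P) : smax (Rq q p) = q%:Z - (nu p)%:Z.
Proof.
have [H1 H2] := @smax_spec _ (Rq_nil p).
have := H2 (q%:Z - (nu p)%:Z); rewrite Rq_mem lexx lo_hi => /(_ isT).
move: H1; rewrite Rq_mem => /andP[_ h] h'; apply/eqP; rewrite eq_le h h'.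
by [].
Qed.

Lemma elem_iff (x : P * int) : gamma_elem (Rq q) x =
  (1 + (delta x.1)%:Z <= x.2) && (x.2 <= q%:Z - (nu x.1)%:Z - 1).
Proof.
rewrite /gamma_elem smax_Rq Rq_mem.
apply/idP/idP.
  move=> /andP[/andP[h1 h2] h3]; move/eqP: h3 => h3; apply/andP; split => //; lia.
move=> /andP[h1 h2]; apply/andP; split; first (apply/andP; split => //; lia).
apply/eqP; lia.
Qed.


Notation G := (@gamma_gen _ P (Rq q)).

Lemma elemE (p : P) k : gamma_elem (Rq q) (p, k) ->
  [/\ k \in Rq q p, k + 1 \in Rq q p, 1 + (delta p)%:Z <= k & k <= q%:Z - (nu p)%:Z - 1].
Proof.
rewrite elem_iff /= => /andP[h1 h2]; split => //; rewrite Rq_mem; apply/andP; split; lia.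
Qed.

Lemma coversF (a b z : P) : covers a b -> (a < z)%O -> (z < b)%O -> False.
Proof. by move=> /andP[_ /forallP /(_ z)]; move=> H h1 h2; rewrite h1 h2 in H. Qed.

Lemma gen_iff (x y : P * int) : G x y <->
  [/\ gamma_elem (Rq q) x, gamma_elem (Rq q) y &
      ((x.1 = y.1 /\ x.2 = y.2 + 1) \/ (covers x.1 y.1 /\ x.2 + 1 = y.2))].
Proof.
case: x y => [p1 k1] [p2 k2] /=; rewrite /gamma_gen; split.
- move=> [h1 [h2 [[E hs] | [hc [hp [hm hf]]]]]]; split => //.
  + left; split => //; subst p2.
    move: hs => /and3P[hin hlt /allP ha].
    have [_ i2 _ _] := @elemE _ _ h2.
    have H := ha _ i2.
    have : ~~ (k2 + 1 < k1) by apply: contra H => hh; apply/andP; split => //; lia.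
    rewrite -leNgt => hh; lia.
  + right; split => //.
    move: hp => /and3P[hin hlt /allP ha].
    have [_ i2 _ _] := @elemE _ _ h1.
    have H := ha _ i2.
    have : ~~ (k1 + 1 < k2) by apply: contra H => hh; apply/andP; split => //; lia.
    rewrite -leNgt => hh; lia.
- move=> [h1 h2 [[E e]|[hc e]]]; [subst p2|]; do 2 (split => //).
  + left; split => //.
    have [i1 _ _ _] := @elemE _ _ h1.
    apply/and3P; split => //; first lia.
    apply/allP => j _; apply/negP => /andP[a b]; lia.
  + right; split => //.
    have [i1 i2 _ _] := @elemE _ _ h1.
    split; first (apply/and3P; split => //; [lia | apply/allP => j _; apply/negP => /andP[a b]; lia]).
    split; first by move: h1 => /andP[].
    move=> k _ hk; apply/negP => /and3P[_ _ /allP ha].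
    have := ha _ i2; apply/negP; rewrite negbK; apply/andP; split; lia.
Qed.

Lemma gen_irr (x : P * int) : ~ G x x.
Proof.
move/gen_iff => [_ _ [[_ e]|[/andP[h _] _]]]; first lia.
by rewrite ltxx in h.
Qed.

Lemma gen_le {x y : P * int} : G x y -> (x.1 <= y.1)%O.
Proof. by move/gen_iff => [_ _ [[-> _]|[/andP[h _] _]]]; [exact: lexx | exact: ltW]. Qed.

Lemma P1 {x y : P * int} : clos_refl_trans_1n _ G x y -> (x.1 <= y.1)%O.
Proof.
elim => [x0|x0 w y0 Hg _ IH]; first exact: lexx.
exact: le_trans (gen_le Hg) IH.
Qed.

Lemma P2 {x y : P * int} : clos_refl_trans_1n _ G x y -> x.1 = y.1 -> y.2 <= x.2.
Proof.
elim => [x0|x0 w y0 Hg Hr IH] E; first exact: lexx.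
move/gen_iff: (Hg) => [_ _ [[e1 e2]|[/andP[h _] _]]].
  have := IH (etrans (esym e1) E); lia.
have := P1 Hr; rewrite -E => h2.
by have := lt_le_trans h h2; rewrite ltxx.
Qed.

Lemma P3 {x y : P * int} : clos_refl_trans_1n _ G x y -> covers x.1 y.1 -> y.2 <= x.2 + 1.
Proof.
elim => [x0|x0 w y0 Hg Hr IH] C.
  by move: C => /andP[h _]; rewrite ltxx in h.
move/gen_iff: (Hg) => [_ _ [[e1 e2]|[hc e]]].
  rewrite e1 in C; have := IH C; lia.
have := P1 Hr; rewrite le_eqVlt => /orP[/eqP E|hl].
  have := P2 Hr E; lia.
by case: (@coversF _ _ _ C (proj1 (andP hc)) hl).
Qed.


Lemma cov_iff (x y : P * int) : gamma_covers (Rq q) x y <-> G x y.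
Proof.
split.
- case => ex ey nxy lexy Hmid.
  move/clos_rt_rt1n_iff: lexy => H.
  case: H ey nxy Hmid => [|w y' Hg Hr] ey nxy Hmid; first by case: nxy.
  have [_ ew _] := proj1 (gen_iff _ _) Hg.
  have := Hmid w ew (rt_step _ _ _ _ Hg) (clos_rt1n_rt _ _ _ _ Hr).
  case => E; subst; last exact Hg.
  by case: (gen_irr _ Hg).
- move: x y => [p1 k1] [p2 k2] Hg.
  have [ex ey Hc] := proj1 (gen_iff _ _) Hg.
  split => //; first by move=> E; rewrite E in Hg; exact: gen_irr _ Hg.
    exact: rt_step.
  move=> [pz kz] ez /clos_rt_rt1n_iff lxz /clos_rt_rt1n_iff lzy.
  have h1 := P1 lxz; have h2 := P1 lzy.
  simpl in *.
  case: Hc => [[E e]|[hc e]].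
  + subst p2.
    have Ez : pz = p1 by apply/le_anti/andP; split.
    subst pz.
    have a := P2 lxz erefl; have b := P2 lzy erefl; simpl in *.
    have : kz = k1 \/ kz = k2 by lia.
    by case => ->; [left|right].
  + move: h1; rewrite le_eqVlt => /orP[/eqP E|hl1].
      subst pz.
      have a := P2 lxz erefl; have b := P3 lzy hc; simpl in *.
      left; congr (_, _); lia.
    move: h2; rewrite le_eqVlt => /orP[/eqP E|hl2].
      subst pz.
      have a := P2 lzy erefl; have b := P3 lxz hc; simpl in *.
      right; congr (_, _); lia.
    by case: (@coversF _ _ _ hc hl1 hl2).
Qed.

End S.

Theorem corollary2p22 (disp : Order.disp_t) (P : finPOrderType disp) (q : nat) :
  (0 < q)%N ->
  (forall C : {set P}, is_chain C -> (#|C| <= q)%N) ->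
  (forall x : P * int,
     gamma_elem (Rq q) x <->
     (1 + (delta x.1)%:Z <= x.2) && (x.2 <= q%:Z - (nu x.1)%:Z - 1)) /\
  (forall x y : P * int,
     gamma_covers (Rq q) x y <->
     [/\ (1 + (delta x.1)%:Z <= x.2) && (x.2 <= q%:Z - (nu x.1)%:Z - 1),
         (1 + (delta y.1)%:Z <= y.2) && (y.2 <= q%:Z - (nu y.1)%:Z - 1) &
         ((x.1 = y.1 /\ x.2 = y.2 + 1) \/ (covers x.1 y.1 /\ x.2 + 1 = y.2))]).
Proof.
move=> _ Hq; split.
  by move=> x; rewrite (@elem_iff _ _ q Hq x).
move=> x y; rewrite (@cov_iff _ _ q Hq x y) (@gen_iff _ _ q Hq x y).
by rewrite !(@elem_iff _ _ q Hq).
Qed.
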